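(* Let $V$ be a finite vocabulary. Each word $x\in V$ has a synonym set $S_x\subseteq V$ with $x\in S_x$, and the synonym relation is symmetric ($x'\in S_x$ iff $x\in S_{x'}$). Each word $x\in V$ has a nonempty perturbation set $P_x\subseteq V$. Fix integers $L\ge 1$ and $0\le R\le L$, a finite label set $\mathcal{Y}$, and a classifier $f: V^L\to\mathcal{Y}$. For a sentence $X=x_1,\ldots,x_L\in V^L$ let $$S_X=\Big\{X'=x'_1,\ldots,x'_L\in V^L:\ \textstyle\sum_{i=1}^L \mathbb{I}\{x'_i\neq x_i\}\le R,\ x'_i\in S_{x_i}\ \forall i\Big\},$$ let $\Pi_X$ be the probability distribution on $V^L$ given by $\Pi_X(Z)=\prod_{i=1}^L \mathbb{I}\{z_i\in P_{x_i}\}/|P_{x_i}|$ for $Z=z_1,\ldots,z_L$, and let $g^{\mathrm{RS}}(X,c)=\mathbb{P}_{Z\sim\Pi_X}(f(Z)=c)$ for $c\in\mathcal{Y}$. Assume $|P_x|=|P_{x'}|$ for every word $x$ and every synonym $x'\in S_x$. Define, for each word $x$, $q_x=\min_{x'\in S_x}|P_x\cap P_{x'}|/|P_x|$. For a given sentence $X=x_1,\ldots,x_L$, order its positions as $i_1,\ldots,i_L$ so that $q_{x_{i_1}}\le q_{x_{i_2}}\le\cdots\le q_{x_{i_L}}$, and set $q_X:=1-\prod_{j=1}^R q_{x_{i_j}}$. Then for every label $c\in\mathcal{Y}$, $$\min_{X'\in S_X} g^{\mathrm{RS}}(X',c)\ge \max\big(g^{\mathrm{RS}}(X,c)-q_X,\,0\big),\qquad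 \max_{X'\in S_X} g^{\mathrm{RS}}(X',c)\le \min\big(g^{\mathrm{RS}}(X,c)+q_X,\,1\big).$$ Equivalently, $|g^{\mathrm{RS}}(X',c)-g^{\mathrm{RS}}(X,c)|\le q_X$ for all $X'\in S_X$ and all $c\in\mathcal{Y}$.
   Context: $g^{\mathrm{RS}}(X,c)$ is the ''soft score'' of label $c$ of the smoothed classifier $f^{\mathrm{RS}}(X)=\arg\max_{c\in\mathcal{Y}} g^{\mathrm{RS}}(X,c)$. $S_X$ is the set of adversarial sentences obtained by replacing at most $R$ words of $X$ by synonyms. *)

(* Defs.v *)
From HB Require Import structures.
From mathcomp Require Import all_boot all_order all_algebra.
Set Implicit Arguments. Unset Strict Implicit. Unset Printing Implicit Defensive.
Import Order.TTheory GRing.Theory Num.Theory.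
Local Open Scope ring_scope.

Definition sentence (V : finType) (L : nat) := {ffun 'I_L -> V}.

Definition adv_set (V : finType) (L R : nat) (S : V -> {set V})
  (X : sentence V L) : {set sentence V L} :=
  [set X' : sentence V L |
     (#|[set i : 'I_L | X' i != X i]| <= R)%N && [forall i, X' i \in S (X i)]].

Definition Pi (F : realFieldType) (V : finType) (L : nat) (P : V -> {set V})
  (X Z : sentence V L) : F :=
  \prod_(i < L) ((Z i \in P (X i))%:R / #|P (X i)|%:R).

Definition gRS (F : realFieldType) (V Y : finType) (L : nat) (P : V -> {set V})
  (f : sentence V L -> Y) (X : sentence V L) (c : Y) : F :=
  \sum_(Z : sentence V L | f Z == c) Pi F P X Z.

(* q_x = min_{x' in S_x} |P_x cap P_x'| / |P_x|  (S_x is nonempty since x in S_x;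
   the default 1 of the iterated min is attained at x' = x). *)
Definition qword (F : realFieldType) (V : finType) (S P : V -> {set V}) (x : V) : F :=
  \big[Num.min/1]_(x' in S x) (#|P x :&: P x'|%:R / #|P x|%:R).

Definition qsent (F : realFieldType) (V : finType) (L R : nat) (S P : V -> {set V})
  (X : sentence V L) : F :=
  1 - \prod_(q <- take R (sort <=%R [seq qword F S P (X i) | i <- enum 'I_L])) q.

(* Main.v *)
Require Import Defs.
From HB Require Import structures.
From mathcomp Require Import all_boot all_order all_algebra.
From mathcomp Require Import lra.
Set Implicit Arguments. Unset Strict Implicit. Unset Printing Implicit Defensive.
Import Order.TTheory GRing.Theory Num.Theory.
Local Open Scope ring_scope.

Lemma prod01 (F : realFieldType) (s : seq F) :
  all (fun x => 0 <= x <= 1) s -> 0 <= \prod_(x <- s) x <= 1.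
Proof.
elim: s => [|a s IH] /=; first by rewrite big_nil ler01 lexx.
move=> /andP [/andP [a0 a1] /IH /andP [p0 p1]].
rewrite big_cons mulr_ge0 //=.
by have := ler_pM a0 p0 a1 p1; rewrite mulr1.
Qed.

Lemma take_sorted_prod (F : realFieldType) (w : seq F) :
  sorted <=%R w -> all (fun x => 0 <= x <= 1) w ->
  forall n (t u : seq F), perm_eq w (t ++ u) -> (size t <= n)%N ->
  \prod_(x <- take n w) x <= \prod_(x <- t) x.
Proof.
elim: w => [|m r IH] Hs Ha n t u Hp Hn.
  have := perm_size Hp; rewrite size_cat /=.
  by case: t {Hp Hn} => //= _; rewrite !big_nil.
case: n Hn => [|n] Hn.
  by case: t Hn Hp => // _ _; rewrite /= !big_nil.
have Hr : sorted <=%R r by move: Hs => /= /path_sorted.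
have Hmr : all (fun y => m <= y) r.
  by move: Hs => /= /(order_path_min le_trans).
move: Ha => /= /andP [/andP [m0 m1] Har].
rewrite /= big_cons.
have Htk : all (fun x => 0 <= x <= 1) (take n r).
  by apply/allP => x /mem_take; move/allP: Har; apply.
case/andP: (prod01 Htk) => pt0 pt1.
case: (boolP (m \in t)) => Hmt.
  have Hpt := perm_to_rem Hmt.
  rewrite (perm_big _ Hpt) big_cons.
  apply: ler_wpM2l => //.
  apply: (IH Hr Har n (rem m t) u).
    by rewrite -(perm_cons m); apply: (perm_trans Hp); rewrite -cat_cons perm_cat2r.
  by rewrite size_rem // -subn1 leq_subLR add1n.
case: t Hp Hn Hmt => [|y t'] Hp Hn Hmt.
  by rewrite big_nil; have := ler_pM m0 pt0 m1 pt1; rewrite mulr1.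
have Hmu : m \in u.
  by have := perm_mem Hp m; rewrite mem_head mem_cat (negbTE Hmt) /= => <-.
have Hp2 : perm_eq r (t' ++ y :: rem m u).
  rewrite -(perm_cons m); apply: (perm_trans Hp).
  have H1 := permP (perm_to_rem Hmu).
  apply/permP => p; move: (H1 p); rewrite /= !count_cat /= => ->.
  move: (nat_of_bool (p y)) (nat_of_bool (p m)) (count p t') (count p (rem m u)) => a c b d.
  by rewrite [RHS]addnCA (addnCA c) addnCA.
have Hy : y \in m :: r by rewrite (perm_mem Hp) mem_cat mem_head.
have Hmy : m <= y.
  move: Hy; rewrite in_cons => /orP [/eqP -> //|]; move/allP: Hmr; exact.
rewrite big_cons; apply: ler_pM => //.
exact: (IH Hr Har n t' (y :: rem m u) Hp2 Hn).
Qed.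

Lemma sum_ind (F : realFieldType) (V : finType) (C : {set V}) :
  \sum_(j : V) ((j \in C)%:R : F) = #|C|%:R.
Proof.
rewrite -sumr_const [RHS]big_mkcond /=; apply: eq_bigr => j _.
by case: (j \in C).
Qed.

Lemma sum_prod (F : realFieldType) (V : finType) (L : nat) (G : 'I_L -> V -> F) :
  \sum_(Z : sentence V L) \prod_i G i (Z i) = \prod_i \sum_j G i j.
Proof. by rewrite bigA_distr_bigA. Qed.

Lemma sum_Pi1 (F : realFieldType) (V : finType) (L : nat) (P : V -> {set V})
  (X : sentence V L) : (forall x, P x != set0) ->
  \sum_(Z : sentence V L) Pi F P X Z = 1.
Proof.
move=> HP; rewrite /Pi (sum_prod (fun i j => (j \in P (X i))%:R / #|P (X i)|%:R)); apply: big1 => i _.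
rewrite -mulr_suml sum_ind divff // pnatr_eq0 -lt0n card_gt0; exact: HP.
Qed.

Lemma Pi_ge0 (F : realFieldType) (V : finType) (L : nat) (P : V -> {set V})
  (X Z : sentence V L) : 0 <= Pi F P X Z.
Proof. by apply: prodr_ge0 => i _; rewrite divr_ge0 ?ler0n. Qed.

Lemma sum_cond_le (F : realFieldType) (T : finType) (p : T -> F) (Q : pred T) :
  (forall z, 0 <= p z) -> \sum_(z | Q z) p z <= \sum_z p z.
Proof.
move=> Hp; rewrite [X in _ <= X](bigID Q) /= lerDl.
by apply: sumr_ge0 => z _.
Qed.

Lemma gen_bound (F : realFieldType) (T : finType) (p1 p2 m : T -> F) (Q : pred T) :
  (forall z, 0 <= m z <= p1 z) -> (forall z, m z <= p2 z) -> \sum_z p1 z = 1 ->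
  \sum_(z | Q z) p1 z - \sum_(z | Q z) p2 z <= 1 - \sum_z m z.
Proof.
move=> H1 H2 Hs.
apply: (@le_trans _ _ (\sum_(z | Q z) p1 z - \sum_(z | Q z) m z)).
  by rewrite lerB // ler_sum.
rewrite -Hs -!sumrB; apply: sum_cond_le => z.
by case/andP: (H1 z) => _; rewrite subr_ge0.
Qed.

Theorem theorem1 (F : realFieldType) (V Y : finType) (L R : nat)
  (S P : V -> {set V}) (f : sentence V L -> Y)
  (HS_refl : forall x : V, x \in S x)
  (HS_sym : forall x x' : V, (x' \in S x) = (x \in S x'))
  (HP_ne : forall x : V, P x != set0)
  (HL : (1 <= L)%N) (HR : (R <= L)%N)
  (HPcard : forall x x' : V, x' \in S x -> #|P x| = #|P x'|)
  (X : sentence V L) (c : Y) :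
  (forall X' : sentence V L, X' \in adv_set R S X ->
     Num.max (gRS F P f X c - qsent F R S P X) 0 <= gRS F P f X' c /\
     gRS F P f X' c <= Num.min (gRS F P f X c + qsent F R S P X) 1) /\
  (forall X' : sentence V L, X' \in adv_set R S X ->
     `|gRS F P f X' c - gRS F P f X c| <= qsent F R S P X).
Proof.
suff Hab : forall X' : sentence V L, X' \in adv_set R S X ->
     `|gRS F P f X' c - gRS F P f X c| <= qsent F R S P X.
  split => // X' HX'; have := Hab X' HX'.
  have g0 : 0 <= gRS F P f X' c by apply: sumr_ge0 => Z _; exact: Pi_ge0.
  have g1 : gRS F P f X' c <= 1.
    by rewrite -(sum_Pi1 F X' HP_ne); apply: sum_cond_le => z; exact: Pi_ge0.
  rewrite ler_norml => /andP [h1 h2].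
  split; [rewrite ge_max g0 andbT | rewrite le_min g1 andbT].
    lra.
  lra.
move=> X' HX'.
move: (HX'); rewrite inE => /andP [HD /forallP Hsyn].
set D := [set i | X' i != X i] in HD.
have card_eq i : #|P (X' i)| = #|P (X i)| by rewrite (HPcard _ _ (Hsyn i)).
have npos x : 0 < (#|P x|%:R : F) by rewrite ltr0n card_gt0.
set w := fun (i : 'I_L) (j : V) => ((j \in P (X i) :&: P (X' i))%:R : F) / #|P (X i)|%:R.
set M := fun Z : sentence V L => \prod_i w i (Z i).
have HM1 z : 0 <= M z <= Pi F P X z.
  rewrite /M /Pi; apply/andP; split.
    by apply: prodr_ge0 => i _; rewrite /w divr_ge0 ?ler0n.
  apply: ler_prod => i _; rewrite /w divr_ge0 ?ler0n //=.
  rewrite ler_pM2r ?invr_gt0 // ler_nat inE.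
  by case: (z i \in P (X i)); case: (z i \in P (X' i)).
have HM2 z : M z <= Pi F P X' z.
  rewrite /M /Pi; apply: ler_prod => i _; rewrite /w divr_ge0 ?ler0n //=.
  rewrite card_eq ler_pM2r ?invr_gt0 // ler_nat inE.
  by case: (z i \in P (X i)); case: (z i \in P (X' i)).
have HM1' z : 0 <= M z <= Pi F P X' z.
  by rewrite HM2 andbT; case/andP: (HM1 z).
set o := fun i : 'I_L => (#|P (X i) :&: P (X' i)|%:R : F) / #|P (X i)|%:R.
have sumM : \sum_z M z = \prod_i o i.
  rewrite /M (sum_prod w); apply: eq_bigr => i _.
  by rewrite /w -mulr_suml sum_ind.
have Hdiff : `|gRS F P f X' c - gRS F P f X c| <= 1 - \prod_i o i.
  rewrite -sumM ler_norml; apply/andP; split.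
    rewrite lerNl opprB; exact: gen_bound HM1 HM2 (sum_Pi1 F X HP_ne).
  exact: gen_bound HM1' (fun z => proj2 (andP (HM1 z))) (sum_Pi1 F X' HP_ne).
apply: (le_trans Hdiff); rewrite /qsent lerB //.
set qf := fun i : 'I_L => qword F S P (X i).
have qbnd i : 0 <= qf i <= 1.
  rewrite /qf /qword; apply/andP; split.
    by apply: le_bigmin => // x' _; rewrite divr_ge0 ?ler0n.
  exact: bigmin_le_id.
have qo i : qf i <= o i.
  rewrite /qf /qword /o; exact: (bigmin_le_cond _ (fun x' => (#|P (X i) :&: P x'|%:R : F) / #|P (X i)|%:R) (Hsyn i)).
have Ho1 i : i \notin D -> o i = 1.
  rewrite /o inE negbK => /eqP ->; rewrite setIid divff //.
  by rewrite gt_eqF ?npos.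
have -> : \prod_i o i = \prod_(i in D) o i.
  rewrite (bigID (mem D)) /= [X in _ * X]big1 ?mulr1 //.
apply: (@le_trans _ _ (\prod_(i in D) qf i)); last first.
  by apply: ler_prod => i _; rewrite qo; case/andP: (qbnd i) => -> _.
have -> : [seq qword F S P (X i) | i <- enum 'I_L] = map qf (enum 'I_L) by [].
have Hperm : perm_eq (map qf (enum 'I_L)) (map qf (enum D) ++ map qf (enum (~: D))).
  rewrite -map_cat perm_map // uniq_perm ?enum_uniq //.
    rewrite cat_uniq !enum_uniq /= andbT; apply/hasPn => i.
    by rewrite !mem_enum in_setC.
  by move=> i; rewrite mem_cat !mem_enum in_setC; case: (i \in D).
rewrite -big_enum -(big_map qf predT id).
apply: take_sorted_prod.
- by apply: sort_sorted => x y; exact: le_total.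
- apply/allP => x; rewrite mem_sort => /mapP [i _ ->]; exact: qbnd.
- rewrite perm_sort; exact: Hperm.
- by rewrite size_map -cardE.
Qed.
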